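(* Let $G$ be a harmonic-even partial cube and $F_{ab}$ a $\Theta$-class of $G$. If $\alpha$ is an automorphism of $G$ such that $v^{\alpha}=v$ and $u^{\alpha}=u$ for every edge $vu\in F_{ab}$, then $\alpha$ is the identity.
   Context: A partial cube is a graph isometrically embeddable into a hypercube. On edges define $ab\,\Theta\,xy$ iff $d(a,x)+d(b,y)\neq d(a,y)+d(b,x)$ ($d$ the shortest-path distance); in a partial cube this is an equivalence relation, and $F_{uv}$ denotes the $\Theta$-class of edge $uv$. A graph is harmonic-even if every vertex $v$ has a unique vertex $\bar v$ at distance $\mathrm{diam}(G)$ and $\bar u\bar v$ is an edge whenever $uv$ is an edge. $v^{\alpha}$ denotes the image of $v$ under $\alpha$. *)

(* Defs.v *)
From mathcomp Require Import all_boot.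
Set Implicit Arguments. Unset Strict Implicit. Unset Printing Implicit Defensive.

Section Graphs.
Variable T : finType.

Definition simple_graph (e : rel T) : Prop := symmetric e /\ irreflexive e.

Fixpoint ball (e : rel T) (x : T) (n : nat) : {set T} :=
  if n is k.+1 then ball e x k :|: [set y | [exists z in ball e x k, e z y]]
  else [set x].

(* shortest-path distance: least n with y within n steps of x
   (meaningful for connected graphs, where it is < #|T|) *)
Definition dist (e : rel T) (x y : T) : nat :=
  find (fun n => y \in ball e x n) (iota 0 #|T|).

Definition connected (e : rel T) : Prop := forall x y : T, connect e x y.

Definition hamming (n : nat) (u v : {ffun 'I_n -> bool}) : nat :=
  #|[set i | u i != v i]|.

Definition partial_cube (e : rel T) : Prop :=
  simple_graph e /\ connected e /\
  exists n (f : T -> {ffun 'I_n -> bool}),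
    forall x y, dist e x y = hamming (f x) (f y).

Definition diam (e : rel T) : nat := \max_(x : T) \max_(y : T) dist e x y.

Definition harmonic_even (e : rel T) : Prop :=
  (forall v : T, exists! w : T, dist e v w = diam e) /\
  (forall u v ub vb : T, e u v -> dist e u ub = diam e ->
     dist e v vb = diam e -> e ub vb).

Definition Theta (e : rel T) (a b x y : T) : bool :=
  dist e a x + dist e b y != dist e a y + dist e b x.

Definition in_F (e : rel T) (a b x y : T) : bool := e x y && Theta e a b x y.

Definition automorphism (e : rel T) (alpha : T -> T) : Prop :=
  bijective alpha /\ forall x y, e (alpha x) (alpha y) = e x y.

End Graphs.

(* Main.v *)
Require Import Defs.
From mathcomp Require Import all_boot zify.
Set Implicit Arguments. Unset Strict Implicit. Unset Printing Implicit Defensive.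

Section DistLemmas.
Variable T : finType.
Variable e : rel T.
Hypothesis conn : connected e.

Lemma ball_last x p : path e x p -> last x p \in ball e x (size p).
Proof.
elim/last_ind: p => [|p z IH]; first by rewrite /= inE.
rewrite rcons_path last_rcons size_rcons => /andP[/IH Hp Hz] /=.
by rewrite inE; apply/orP; right; rewrite inE; apply/existsP; exists (last x p); rewrite Hp.
Qed.

Lemma ex_ball x y : exists2 k, k < #|T| & y \in ball e x k.
Proof.
have /connectP [p Hp ->] := conn x y.
case: (shortenP Hp) => p' Hp' Hu _.
exists (size p'); last exact: ball_last.
have := max_card (mem (x :: p')); rewrite (card_uniqP Hu) /=; done.
Qed.

Lemma dist_found x y : y \in ball e x (dist e x y).
Proof.
have [k Hk Hb] := ex_ball x y.
have Hh : has (fun n => y \in ball e x n) (iota 0 #|T|).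
  by apply/hasP; exists k => //; rewrite mem_iota.
have := nth_find 0 Hh; rewrite -/(dist e x y).
have := Hh; rewrite has_find size_iota => Hlt.
by rewrite nth_iota.
Qed.

Lemma dist_min x y k : y \in ball e x k -> dist e x y <= k.
Proof.
move=> Hb; rewrite leqNgt; apply/negP => Hlt.
have Hs : k < #|T|.
  apply: (leq_trans Hlt); rewrite /dist; have := find_size (fun n => y \in ball e x n) (iota 0 #|T|).
  by rewrite size_iota.
have := before_find 0 Hlt; rewrite nth_iota // add0n Hb; done.
Qed.

Lemma dist0 x y : dist e x y = 0 -> y = x.
Proof. by move=> H; have := dist_found x y; rewrite H /= inE => /eqP. Qed.

Lemma distxx x : dist e x x = 0.
Proof. by apply/eqP; rewrite -leqn0; apply: dist_min; rewrite /= inE. Qed.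

Lemma ball_edge x z t k : z \in ball e x k -> e z t -> t \in ball e x k.+1.
Proof. by move=> Hz Ht /=; rewrite inE; apply/orP; right; rewrite inE; apply/existsP; exists z; rewrite Hz. Qed.

Lemma dist_edge x z t : e z t -> dist e x t <= (dist e x z).+1.
Proof. by move=> Ht; apply: dist_min; apply: ball_edge (dist_found x z) Ht. Qed.

Lemma dist_step x t m : dist e x t = m.+1 -> exists z, e z t /\ dist e x z = m.
Proof.
move=> Hd; have := dist_found x t; rewrite Hd /= inE => /orP[Hb|].
  by have := dist_min Hb; rewrite Hd ltnn.
rewrite inE => /existsP [z /andP[Hz Hzt]]; exists z; split => //.
have H1 := dist_min Hz; have H2 := dist_edge x Hzt.
by apply/eqP; rewrite eqn_leq H1 -ltnS -Hd H2.
Qed.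

Lemma dist_adj s t : irreflexive e -> e s t -> dist e s t = 1.
Proof.
move=> irr Hst; apply/eqP; rewrite eqn_leq; apply/andP; split.
  apply: dist_min; apply: ball_edge Hst; rewrite /= inE //.
rewrite lt0n; apply/eqP => H; have := dist0 H => Ht; subst t; by rewrite irr in Hst.
Qed.

Lemma ball_auto (alpha g : T -> T) :
  cancel alpha g -> cancel g alpha -> (forall x y, e (alpha x) (alpha y) = e x y) ->
  forall x n y, (alpha y \in ball e (alpha x) n) = (y \in ball e x n).
Proof.
move=> c1 c2 He x; elim=> [|n IH] y /=.
  by rewrite !in_set1 (can_eq c1).
rewrite !inE IH; congr orb.
apply/existsP/existsP => [[z /andP[Hz Hzy]]|[z /andP[Hz Hzy]]].
  exists (g z); rewrite -IH c2 Hz /= -He c2 //.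
by exists (alpha z); rewrite IH Hz He.
Qed.

Lemma dist_auto (alpha g : T -> T) :
  cancel alpha g -> cancel g alpha -> (forall x y, e (alpha x) (alpha y) = e x y) ->
  forall x y, dist e (alpha x) (alpha y) = dist e x y.
Proof.
move=> c1 c2 He x y; rewrite /dist; apply: eq_find => n.
exact: ball_auto.
Qed.

End DistLemmas.

Section Ham.
Variable n : nat.
Implicit Types p q r : {ffun 'I_n -> bool}.

Lemma hammingE p q : hamming p q = \sum_(j < n) (p j != q j).
Proof.
rewrite /hamming -sum1dep_card big_mkcond /=; apply: eq_bigr => j _.
by case: (p j != q j).
Qed.

Definition diffat p q (k : 'I_n) := (q k != p k) /\ (forall j, j != k -> q j = p j).

Lemma onediff r p q k : diffat p q k ->
  hamming r p + (r k != q k) = hamming r q + (r k != p k).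
Proof.
move=> [Hk Hj]; rewrite !hammingE.
rewrite [\sum_(j < n) (r j != p j)](bigD1 k) // [\sum_(j < n) (r j != q j)](bigD1 k) //=.
have -> : \sum_(i < n | i != k) (r i != p i) = \sum_(i < n | i != k) (r i != q i).
  by apply: eq_bigr => j /Hj ->.
move: (\sum_(i < n | i != k) (r i != q i)) => S; move: (r k != p k) (r k != q k) => b1 b2; lia.
Qed.

Lemma onediff_neq r p q k : diffat p q k -> hamming r p != hamming r q.
Proof.
move=> H; have := onediff r H; case: H => Hk _.
move: Hk; case: (q k); case: (p k); case: (r k) => //= _; lia.
Qed.

Lemma sum_pointwise (F G : 'I_n -> nat) :
  (forall j, F j <= G j) -> \sum_j F j = \sum_j G j -> forall j, F j = G j.
Proof.
move=> Hle Hs j; move: Hs.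
rewrite [\sum_j F j](bigD1 j) // [\sum_j G j](bigD1 j) //=.
have : \sum_(i < n | i != j) F i <= \sum_(i < n | i != j) G i by apply: leq_sum.
have := Hle j.
move: (\sum_(i < n | i != j) F i) (\sum_(i < n | i != j) G i) (F j) (G j) => a1 a2 a3 a4; lia.
Qed.

End Ham.

Set Default Proof Using "All".
Section Main.
Variables (T : finType) (e : rel T) (n : nat) (f : T -> {ffun 'I_n -> bool}).
Hypotheses (sg : simple_graph e) (conn : connected e)
  (Hf : forall x y, dist e x y = hamming (f x) (f y)) (he : harmonic_even e).

Lemma esym s t : e s t -> e t s.
Proof. by case: sg => sy _; rewrite sy. Qed.

Lemma edge_one s t : e s t -> exists k, diffat (f s) (f t) k.
Proof.
move=> Hst; have H1 := dist_adj conn sg.2 Hst; rewrite Hf /hamming in H1.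
have /cards1P [k Hk] : #|[set j | f s j != f t j]| == 1 by rewrite H1.
exists k; split.
  have : k \in [set j | f s j != f t j] by rewrite Hk set11.
  by rewrite inE eq_sym.
move=> j hj; have : j \notin [set j | f s j != f t j] by rewrite Hk in_set1.
by rewrite inE negbK => /eqP.
Qed.

Definition sig z := odflt z [pick w | dist e z w == diam e].

Lemma sig_dist z : dist e z (sig z) = diam e.
Proof.
rewrite /sig; case: pickP => [w /eqP //|H].
have [w [Hw _]] := he.1 z; by have := H w; rewrite Hw eqxx.
Qed.

Lemma dist_le_diam p q : dist e p q <= diam e.
Proof. by apply: (leq_trans _ (leq_bigmax p)); apply: (leq_bigmax q). Qed.

Lemma sig_edge s t : e s t -> e (sig s) (sig t).
Proof. move=> Hst; exact: he.2 s t (sig s) (sig t) Hst (sig_dist s) (sig_dist t). Qed.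

Lemma antip_flip s t k : e s t -> diffat (f s) (f t) k -> f (sig s) k != f s k.
Proof.
move=> Hst Hk.
have [k1 Hk1] := edge_one (sig_edge Hst).
have [k2 Hk2] := edge_one (sig_edge (esym Hst)).
have h1 : hamming (f s) (f (sig t)) < diam e.
  have := dist_le_diam s (sig t); rewrite Hf leq_eqVlt => /orP[/eqP E|//].
  have := onediff_neq (f s) Hk1; rewrite -Hf sig_dist -E eqxx //.
have h2 : hamming (f t) (f (sig s)) < diam e.
  have := dist_le_diam t (sig s); rewrite Hf leq_eqVlt => /orP[/eqP E|//].
  have := onediff_neq (f t) Hk2; rewrite -Hf sig_dist -E eqxx //.
apply/negP => Heq.
have Hle : \sum_j ((f s j != f (sig s) j) + (f t j != f (sig t) j))
        <= \sum_j ((f s j != f (sig t) j) + (f t j != f (sig s) j)).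
  apply: leq_sum => j _; case: (eqVneq j k) => [->|/(Hk.2) ->].
    rewrite (eqP Heq); move: Hk.1; case: (f t k); case: (f s k); case: (f (sig t) k) => //.
  by rewrite addnC.
rewrite !big_split /= -!hammingE -!Hf !sig_dist !Hf in Hle.
move: Hle h1 h2; move: (hamming (f s) (f (sig t))) (hamming (f t) (f (sig s))) (diam e) => a1 a2 a3.
lia.
Qed.

Lemma diffat_sym s t k : diffat (f s) (f t) k -> diffat (f t) (f s) k.
Proof. by case=> H1 H2; split; [rewrite eq_sym | move=> j /H2 ->]. Qed.

Lemma sig_inv z w j : e z w -> (f (sig z) j != f z j) = (f (sig w) j != f w j).
Proof.
move=> Hzw; have [k Hk] := edge_one Hzw.
have F1 := antip_flip Hzw Hk.
have F2 := antip_flip (esym Hzw) (diffat_sym Hk).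
have [k' Hk'] := edge_one (sig_edge Hzw).
have Ekk : k' = k.
  case: (eqVneq k k') => // hne; have := Hk'.2 k hne => E.
  move: F1 F2 Hk.1; rewrite E; case: (f (sig z) k); case: (f z k); case: (f w k) => //.
subst k'.
case: (eqVneq j k) => [->|hne]; first by rewrite F1 F2.
by rewrite (Hk'.2 j hne) (Hk.2 j hne).
Qed.

Lemma connect_inv (Q : T -> bool) : (forall z w, e z w -> Q z = Q w) -> forall x y, Q x = Q y.
Proof.
move=> HQ x y; have /connectP[p Hp ->] := conn x y.
elim: p x Hp => [//|z p IH] x /= /andP[Hxz Hp].
rewrite (HQ _ _ Hxz); exact: IH.
Qed.

Lemma active_edge p q j : f p j != f q j -> exists s t, e s t /\ f s j != f t j.
Proof.
have /connectP[r Hr ->] := conn p q.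
elim: r p Hr => [|z r IH] p /=; first by rewrite eqxx.
move/andP=> [Hpz Hr] Hne.
case: (eqVneq (f p j) (f z j)) => [Heq|Hn]; last by exists p, z.
by apply: (IH z Hr); rewrite -Heq.
Qed.

Lemma comp_flip p q j : f p j != f q j -> forall z, f (sig z) j = ~~ f z j.
Proof.
move=> H z; have [s [t [Hst Hj]]] := active_edge H.
have [k Hk] := edge_one Hst.
have Ekj : k = j.
  case: (eqVneq j k) => // hne; by rewrite (Hk.2 j hne) eqxx in Hj.
subst k.
have F := antip_flip Hst Hk.
have := connect_inv (Q := fun z => f (sig z) j != f z j) (fun z w => @sig_inv z w j) z s.
rewrite F; case: (f (sig z) j); case: (f z j) => //.
Qed.

Lemma descent x i : forall m t, dist e x t = m -> f t i != f x i ->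
  exists u v, [/\ e u v, diffat (f u) (f v) i & forall j, f t j = f x j -> f u j = f x j].
Proof.
elim=> [|m IH] t Hd Hti.
  by have := dist0 conn Hd => E; subst t; rewrite eqxx in Hti.
have [z [Hzt Hdz]] := dist_step conn Hd.
have [k Hk] := edge_one Hzt.
have Ho := onediff (f x) Hk; rewrite -!Hf Hdz Hd in Ho.
have Hxz : f z k = f x k.
  move: Ho; case: (eqVneq (f x k) (f z k)) => [//|_] /=; case: (f x k != f t k) => /=; lia.
have Hagree : forall j, f t j = f x j -> f z j = f x j.
  move=> j; case: (eqVneq j k) => [->|hne] H; first exact: Hxz.
  by rewrite (Hk.2 j hne) in H.
case: (eqVneq k i) => [Eki|hne].
  by subst k; exists z, t; split.
have Hzi : f z i != f x i.
  by rewrite -(Hk.2 i) // eq_sym.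
have [u [v [Huv Hd' Hag]]] := IH z Hdz Hzi.
by exists u, v; split => // j /Hagree /Hag.
Qed.

End Main.

Lemma inF_diff (T : finType) (e : rel T) (n : nat) (f : T -> {ffun 'I_n -> bool})
  (Hf : forall x y, dist e x y = hamming (f x) (f y)) a b u v i :
  diffat (f a) (f b) i -> e u v -> diffat (f u) (f v) i -> in_F e a b u v.
Proof.
move=> Ha Huv Hu; rewrite /in_F Huv /Theta !Hf !hammingE -!big_split /=.
rewrite (bigD1 i) // [X in _ != X](bigD1 i) //=.
have -> : \sum_(j < n | j != i) ((f a j != f u j) + (f b j != f v j))
        = \sum_(j < n | j != i) ((f a j != f v j) + (f b j != f u j)).
  by apply: eq_bigr => j hj; rewrite (Ha.2 j hj) (Hu.2 j hj).
rewrite eqn_add2r; move: Ha.1 Hu.1.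
by case: (f a i); case: (f b i); case: (f u i); case: (f v i).
Qed.

Theorem lemma3 (T : finType) (e : rel T) (a b : T) (alpha : T -> T) :
  partial_cube e -> harmonic_even e -> e a b ->
  automorphism e alpha ->
  (forall v u : T, in_F e a b v u -> alpha v = v /\ alpha u = u) ->
  forall x : T, alpha x = x.
Proof.
move=> [sg [conn [n [f Hf]]]] he Hab [[g c1 c2] Hae] Hfix x.
have Hd := dist_auto c1 c2 Hae.
have [i Hi] := edge_one sg conn Hf he Hab.
have [Fa Fb] := Hfix a b (inF_diff Hf Hi Hab Hi).
set y := alpha x.
have Hxi : f y i = f x i.
  have Hox := onediff (f x) Hi; have Hoy := onediff (f y) Hi.
  have E1 : hamming (f y) (f a) = hamming (f x) (f a) by rewrite -!Hf -{1}Fa Hd.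
  have E2 : hamming (f y) (f b) = hamming (f x) (f b) by rewrite -!Hf -{1}Fb Hd.
  rewrite E1 E2 in Hoy.
  move: Hox Hoy Hi.1; move: (hamming (f x) (f a)) (hamming (f x) (f b)) => h1 h2.
  case: (f y i); case: (f x i); case: (f a i); case: (f b i) => //=; lia.
have Hci := comp_flip sg conn Hf he (Hi.1).
have Hti : f (sig e y) i != f x i by rewrite Hci -Hxi; case: (f y i).
have [u [v [Huv Hduv Hag]]] := descent sg conn Hf he (erefl (dist e x (sig e y))) Hti.
have [Fu _] := Hfix u v (inF_diff Hf Hi Huv Hduv).
have HA : forall j, f x j != f y j -> f u j = f x j.
  move=> j hj; apply: Hag; rewrite (comp_flip sg conn Hf he hj).
  by move: hj; case: (f x j); case: (f y j).
have Hs : \sum_j ((f x j != f u j) : nat) = \sum_j ((f y j != f u j) : nat).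
  by rewrite -!hammingE -!Hf -{2}Fu Hd.
have Hpt := sum_pointwise _ Hs.
have Efxy : f x = f y.
  apply/ffunP => j; case: (eqVneq (f x j) (f y j)) => // hne.
  have : ((f x j != f u j) : nat) = (f y j != f u j).
    apply: Hpt => j'; case: (eqVneq (f x j') (f y j')) => [->//|hne'].
    by rewrite (HA j' hne') eqxx.
  by rewrite (HA j hne) eqxx eq_sym hne.
have : dist e x y = 0.
  by rewrite Hf Efxy hammingE big1 // => j _; rewrite eqxx.
by move/(dist0 conn).
Qed.
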